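(* Let $h$ be a line tree whose nodes each test a dimension distinct from their ancestors, with set of tested dimensions $d_h$, and let $x$ satisfy $h(x)=l_h$. Then for any $x'$ such that, for all $a\in d_h$, $x'_a\le x_a$ if $f_h(a)=\mathrm{prefix}$ and $x_a\le x'_a$ if $f_h(a)=\mathrm{suffix}$, we have $h(x')=l_h$.
   Context: A line tree is a decision tree (each internal node compares one coordinate with a threshold, each leaf carries a label in $\{0,1\}$) in which every internal node has at least one leaf child, and all leaves except the deepest carry the same label while the deepest leaf carries the opposite label; $l_h$ denotes the label of the deepest leaf. $d_h$ is the set of dimensions tested by nodes of $h$. For $a\in d_h$, $f_h(a)=\mathrm{prefix}$ if at the node testing $a$ the samples with $x_a$ below the threshold are directed toward the leaf labeled $l_h$, and $f_h(a)=\mathrm{suffix}$ if the samples with $x_a$ above the threshold are directed toward that leaf. *)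

(* Defs.v *)
From mathcomp Require Import all_boot all_order all_algebra.
Set Implicit Arguments. Unset Strict Implicit. Unset Printing Implicit Defensive.
Import Order.TTheory GRing.Theory Num.Theory.
Local Open Scope ring_scope.

Inductive dtree (n : nat) (R : Type) : Type :=
| Leaf of bool
| Node of 'I_n & R & dtree n R & dtree n R.
Arguments Leaf {n R}.
Arguments Node {n R}.

Fixpoint eval_tree (n : nat) (R : realDomainType) (h : dtree n R)
    (x : 'I_n -> R) : bool :=
  match h with
  | Leaf b => b
  | Node a t L Rt => if x a <= t then eval_tree L x else eval_tree Rt x
  end.

Fixpoint dims (n : nat) (R : Type) (h : dtree n R) : seq 'I_n :=
  match h with
  | Leaf _ => [::]
  | Node a _ L Rt => a :: dims L ++ dims Rt
  end.

Fixpoint distinct_dims (n : nat) (R : Type) (h : dtree n R) : bool :=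
  match h with
  | Leaf _ => true
  | Node a _ L Rt =>
      [&& a \notin dims L, a \notin dims Rt, distinct_dims L & distinct_dims Rt]
  end.

Definition is_leaf_lbl (n : nat) (R : Type) (h : dtree n R) (b : bool) : bool :=
  if h is Leaf c then c == b else false.

(* line_tree h l : h is a line tree whose deepest leaf carries label l (= l_h). *)
Inductive line_tree (n : nat) (R : Type) : dtree n R -> bool -> Prop :=
| LT_leaf (l : bool) : line_tree (Leaf l) l
| LT_base_l (a : 'I_n) (t : R) (l : bool) :
    line_tree (Node a t (Leaf l) (Leaf (~~ l))) l
| LT_base_r (a : 'I_n) (t : R) (l : bool) :
    line_tree (Node a t (Leaf (~~ l)) (Leaf l)) l
| LT_step_l (a : 'I_n) (t : R) (h : dtree n R) (l : bool) :
    line_tree h l -> ~~ is_leaf_lbl h l -> line_tree (Node a t h (Leaf (~~ l))) l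
| LT_step_r (a : 'I_n) (t : R) (h : dtree n R) (l : bool) :
    line_tree h l -> ~~ is_leaf_lbl h l -> line_tree (Node a t (Leaf (~~ l)) h) l.

(* f_h(a): at the (first) node testing a, [Some true] = prefix (samples below
   the threshold, i.e. going left, are directed toward the leaf labelled l),
   [Some false] = suffix (samples above the threshold, going right, are).
   The child toward the deepest leaf is the child that is not the side leaf
   labelled ~~ l.  [None] if a is not tested. *)
Fixpoint fdir (n : nat) (R : Type) (h : dtree n R) (l : bool) (c : 'I_n)
    : option bool :=
  match h with
  | Leaf _ => None
  | Node a _ L Rt =>
      if a == c then Some (~~ is_leaf_lbl L (~~ l))
      else if is_leaf_lbl L (~~ l) then fdir Rt l c else fdir L l c
  end.

Definition dir_prefix := true.
Definition dir_suffix := false.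

(* Main.v *)
Require Import Defs.
From mathcomp Require Import all_boot all_order all_algebra.
Import Order.TTheory GRing.Theory Num.Theory.
Local Open Scope ring_scope.

Lemma lt_not_neg (n : nat) (R : Type) (h : dtree n R) l :
  line_tree h l -> is_leaf_lbl h (~~ l) = false.
Proof. destruct 1; simpl; try done; by case: l. Qed.

Lemma nbl (l : bool) (P : Prop) : ~~ l = l -> P.
Proof. by case: l. Qed.
Lemma lnb (l : bool) (P : Prop) : l = ~~ l -> P.
Proof. by case: l. Qed.
Lemma lneq (l : bool) : (l == ~~ l) = false.
Proof. by case: l. Qed.

Arguments nbl {l P}.
Arguments lnb {l P}.
Arguments lt_not_neg {n R h l}.

Theorem lemma22 (n : nat) (R : realDomainType) (h : dtree n R) (lh : bool)
    (x x' : 'I_n -> R) :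
  line_tree h lh ->
  distinct_dims h ->
  eval_tree h x = lh ->
  (forall a : 'I_n, a \in dims h ->
     (fdir h lh a = Some dir_prefix -> x' a <= x a) /\
     (fdir h lh a = Some dir_suffix -> x a <= x' a)) ->
  eval_tree h x' = lh.
Proof.
elim => [l|a t l|a t l|a t h0 l Hl IH Hnl|a t h0 l Hl IH Hnl] //=.
- move=> _ Hx /(_ a); rewrite eqxx inE eqxx => /(_ isT) [H _].
  move: Hx; case: ifP => Hxa; last by move=> E; exact: (nbl E).
  move=> _; move: H; rewrite lneq => /(_ erefl) Hle.
  by rewrite (le_trans Hle Hxa).
- move=> _ Hx /(_ a); rewrite eqxx inE eqxx => /(_ isT) [_ H].
  move: Hx; case: ifP => Hxa; first by move=> E; exact: (nbl E).
  move=> _; move: H; rewrite eqxx => /(_ erefl) Hle.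
  case: ifP => // Hx'; move: Hxa; rewrite (le_trans Hle Hx') //.
- rewrite andbT => /andP [Ha Hd] Hx Hf.
  move: Hx; case: ifP => Hxa Hx; last exact: (nbl Hx).
  have Hn := lt_not_neg Hl.
  have := Hf a; rewrite eqxx inE eqxx Hn => /(_ isT) [/(_ erefl) Hle _].
  rewrite (le_trans Hle Hxa); apply: IH => // b Hb.
  have Hba : (a == b) = false by apply/eqP => E; move: Ha; rewrite E Hb.
  by have := Hf b; rewrite Hba Hn inE cats0 Hb orbT => /(_ isT).
- move=> /andP [Ha Hd] Hx Hf.
  move: Hx; case: ifP => Hxa Hx; first exact: (nbl Hx).
  have := Hf a; rewrite eqxx inE eqxx /= eqxx => /(_ isT) [_ /(_ erefl) Hle].
  case: ifP => Hx'; first by move: Hxa; rewrite (le_trans Hle Hx').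
  apply: IH => // b Hb.
  have Hba : (a == b) = false by apply/eqP => E; move: Ha; rewrite E Hb.
  by have := Hf b; rewrite Hba eqxx inE Hb orbT => /(_ isT).
Qed.
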